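(* Let $p\in Pr$ and let $\mathcal{T}$ be a set of $\mathrm{HL}$-types such that every $T\in\mathcal{T}$ has no skeleton subtypes and $p$ is lonely in $T$. If $H$ is a graph all of whose edges are labeled by elements of $\mathcal{T}\cup\{p\}$ and $\mathrm{HL}\vdash H\to p$, then $H=p^\bullet$.
   Context: Hypergraphs: given labels $C$ with $type:C\to\mathbb{N}$, a graph is $G=\langle V,E,att,lab,ext\rangle$ with finite $V,E$, $att:E\to V^\circledast$ (strings of distinct nodes), $lab:E\to C$ with $type(lab(e))=|att(e)|$, $ext\in V^\circledast$; $type(G)=|ext|$; isomorphic graphs identified. Handle $a^\bullet$: nodes $v_1..v_n$, one edge labeled $a$ with $att=v_1\dots v_n$, $ext=v_1\dots v_n$. Replacement $G[e/H]$: remove $e$, insert a disjoint copy of $H$, fuse $i$-th external node of $H$ with $i$-th attachment node of $e$; simultaneous replacement; relabeling $G[e:=a]$. $\mathrm{HL}$: primitive types $Pr$ with $type:Pr\to\mathbb{N}$ (infinitely many of each arity); symbol $\$$ of any arity. Types: primitives; $N\div D$ where $D$ has exactly one edge $d_0$ labeled $\$$, others labeled by types, $type(N)=type(D)$, $type(N\div D)=type_D(d_0)$; $\times(M)$ for a type-labeled graph $M$, $type(\times(M))=type(M)$. Subtypes of a type are the occurrences of types in its inductive construction (the type itself, and recursively subtypes of $N$ and of edge labels of $D$ for $N\div D$, and of edge labels of $M$ for $\times(M)$). Graph sequent $H\to A$ with $type(H)=type(A)$. Axioms $p^\bullet\to p$. Rules: $(\div\to)$: for $N\div D$ with $E_D=\{d_0,\dots,d_k\}$,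 $e\in E_H$ labeled $N$: from $H\to A$, $H_i\to lab(d_i)$ infer $H[e/D][d_0:=N\div D][d_1/H_1,\dots,d_k/H_k]\to A$; $(\to\div)$: from $D[d_0/F]\to N$ infer $F\to N\div D$; $(\times\to)$: if $e\in E_G$ is labeled $\times(F)$, from $G[e/F]\to A$ infer $G\to A$; $(\to\times)$: with $E_M=\{m_1,\dots,m_l\}$, from $H_i\to lab(m_i)$ infer $M[m_1/H_1,\dots,m_l/H_l]\to\times(M)$. Top occurrence: a subtype occurrence $B$ is a top occurrence within $A$ if $A=B$; or $A=\times(M)$ and $B$ is a top occurrence within $lab(e_0)$ for some $e_0\in E_M$; or $A=N\div D$ and $B$ is a top occurrence within $N$. A primitive $p$ is lonely in a type $A$ if for each top occurrence of $p$ within $A$ there is a subtype $\times(M)$ of $A$ with $|E_M|\ge2$ and some $e_0\in E_M$ whose label $lab(e_0)=p$ is that top occurrence. A type is skeleton if it equals $\times(M)$ with $E_M=\emptyset$ and $|ext_M|=|V_M|$. *)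

(* Defs.v *)
From Stdlib Require Import List Arith Bool PeanoNat Permutation.
Import ListNotations.
Set Implicit Arguments.

(** Graphs are identified up to isomorphism via [giso] below. *)
Record graph (L : Type) := mkGraph {
  gV : list nat;
  gE : list (L * list nat);
  gext : list nat }.
Arguments mkGraph {L}.
Arguments gV {L}.
Arguments gE {L}.
Arguments gext {L}.

Definition wf_graph {L} (G : graph L) : Prop :=
  NoDup (gV G) /\ NoDup (gext G) /\ incl (gext G) (gV G) /\
  (forall e, In e (gE G) -> NoDup (snd e) /\ incl (snd e) (gV G)).

Definition lab_at {L} (G : graph L) (i : nat) : option L :=
  option_map fst (nth_error (gE G) i).

Definition map_lab {L L'} (g : L -> L') (G : graph L) : graph L' :=
  mkGraph (gV G) (map (fun e => (g (fst e), snd e)) (gE G)) (gext G).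

Definition giso {L L'} (R : L -> L' -> Prop) (G : graph L) (H : graph L') : Prop :=
  exists f : nat -> nat,
    (forall x y, In x (gV G) -> In y (gV G) -> f x = f y -> x = y) /\
    Permutation (map f (gV G)) (gV H) /\
    map f (gext G) = gext H /\
    exists es, Permutation es (gE H) /\
      Forall2 (fun e1 e2 => R (fst e1) (fst e2) /\ map f (snd e1) = snd e2) (gE G) es.

Fixpoint pos (x : nat) (l : list nat) : option nat :=
  match l with
  | [] => None
  | y :: l' => if Nat.eqb x y then Some 0 else option_map S (pos x l')
  end.

Definition fresh {L} (G : graph L) : nat := S (fold_right Nat.max 0 (gV G)).

(** image of node [v] of the inserted graph [H], for an edge attached at [a],
    internal nodes shifted by [s]; the j-th external node is fused with the
    j-th attachment node *)
Definition embed_node {L} (H : graph L) (a : list nat) (s v : nat) : nat :=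
  match pos v (gext H) with Some j => nth j a 0 | None => s + v end.

Definition new_nodes {L} (H : graph L) (s : nat) : list nat :=
  map (Nat.add s) (filter (fun v => match pos v (gext H) with Some _ => false | None => true end) (gV H)).

Definition new_edges {L} (H : graph L) (a : list nat) (s : nat) : list (L * list nat) :=
  map (fun e => (fst e, map (embed_node H a s) (snd e))) (gE H).

(** simultaneous replacement: the edge with index i is replaced by [H] when
    [f i = Some H] (its edges are put at its place in the edge list) *)
Fixpoint repl_go {L} (f : nat -> option (graph L)) (es : list (L * list nat)) (i s : nat)
  : list nat * list (L * list nat) :=
  match es with
  | [] => ([], [])
  | e :: es' =>
    match f i with
    | None => let r := repl_go f es' (S i) s in (fst r, e :: snd r)
    | Some H => let r := repl_go f es' (S i) (s + fresh H) in
                (new_nodes H s ++ fst r, new_edges H (snd e) s ++ snd r)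
    end
  end.

Definition repl {L} (G : graph L) (f : nat -> option (graph L)) : graph L :=
  let r := repl_go f (gE G) 0 (fresh G) in
  mkGraph (gV G ++ fst r) (snd r) (gext G).

Definition single {L} (e : nat) (H : graph L) : nat -> option (graph L) :=
  fun j => if Nat.eqb j e then Some H else None.

(** * HL types.  [Prim n k] is the n-th primitive type of arity k;
    in [Div N D], the label [None] of D stands for the symbol $. *)
Inductive typ : Type :=
| Prim : nat -> nat -> typ
| Div : typ -> graph (option typ) -> typ
| Prod : graph typ -> typ.

Definition typeOf (A : typ) : nat :=
  match A with
  | Prim _ k => k
  | Div _ D =>
      match find (fun e => match fst e with None => true | Some _ => false end) (gE D) with
      | Some e => length (snd e) | None => 0 end
  | Prod M => length (gext M)
  end.

Inductive wf_typ : typ -> Prop :=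
| wf_prim n k : wf_typ (Prim n k)
| wf_div N D :
    wf_typ N -> wf_graph D ->
    length (filter (fun e => match fst e with None => true | Some _ => false end) (gE D)) = 1 ->
    (forall T a, In (Some T, a) (gE D) -> wf_typ T /\ typeOf T = length a) ->
    typeOf N = length (gext D) ->
    wf_typ (Div N D)
| wf_prod M :
    wf_graph M ->
    (forall e, In e (gE M) -> wf_typ (fst e) /\ typeOf (fst e) = length (snd e)) ->
    wf_typ (Prod M).

Definition wf_lgraph (G : graph typ) : Prop :=
  wf_graph G /\ (forall e, In e (gE G) -> wf_typ (fst e) /\ typeOf (fst e) = length (snd e)).

(** equality of types, where graphs occurring in types are identified up to
    isomorphism *)
Inductive typ_equiv : typ -> typ -> Prop :=
| te_prim n k : typ_equiv (Prim n k) (Prim n k)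
| te_div N N' D D' :
    typ_equiv N N' ->
    (exists f : nat -> nat,
      (forall x y, In x (gV D) -> In y (gV D) -> f x = f y -> x = y) /\
      Permutation (map f (gV D)) (gV D') /\
      map f (gext D) = gext D' /\
      exists es, Permutation es (gE D') /\
        Forall2 (fun e1 e2 => ((fst e1 = None /\ fst e2 = None) \/
             exists x y, fst e1 = Some x /\ fst e2 = Some y /\ typ_equiv x y) /\ map f (snd e1) = snd e2)
          (gE D) es) ->
    typ_equiv (Div N D) (Div N' D')
| te_prod M M' :
    (exists f : nat -> nat,
      (forall x y, In x (gV M) -> In y (gV M) -> f x = f y -> x = y) /\
      Permutation (map f (gV M)) (gV M') /\
      map f (gext M) = gext M' /\
      exists es, Permutation es (gE M') /\
        Forall2 (fun e1 e2 => typ_equiv (fst e1) (fst e2) /\ map f (snd e1) = snd e2)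
          (gE M) es) ->
    typ_equiv (Prod M) (Prod M').

Definition handle (n k : nat) : graph typ :=
  mkGraph (seq 0 k) [(Prim n k, seq 0 k)] (seq 0 k).

(** conclusion of the (÷→) rule:  H[e/D][d0 := N÷D][d1/H1,...,dk/Hk],
    where the premise graph for the edge d_i of D (index i) is [Hs i] *)
Definition divL_concl (H : graph typ) (e : nat) (N : typ) (D : graph (option typ))
  (Hs : nat -> graph typ) : graph typ :=
  let G1 := repl (map_lab Some H) (single e D) in
  let G2 := map_lab (fun o => match o with None => Div N D | Some T => T end) G1 in
  repl G2 (fun j => if (e <=? j) && (j <? e + length (gE D)) then
                      match lab_at D (j - e) with
                      | Some (Some _) => Some (Hs (j - e))
                      | _ => None end
                    else None).

Definition plug_dollar (D : graph (option typ)) (F : graph typ) : graph typ :=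
  map_lab (fun o => match o with Some T => T | None => Prim 0 0 end)
    (repl D (fun i => match lab_at D i with
                      | Some None => Some (map_lab Some F)
                      | _ => None end)).

Inductive derivable : graph typ -> typ -> Prop :=
| d_ax n k : derivable (handle n k) (Prim n k)
| d_divL N D H e A (Hs : nat -> graph typ) :
    wf_typ (Div N D) ->
    lab_at H e = Some N ->
    derivable H A ->
    (forall i T, lab_at D i = Some (Some T) -> derivable (Hs i) T) ->
    derivable (divL_concl H e N D Hs) A
| d_divR N D F :
    wf_typ (Div N D) -> wf_lgraph F ->
    length (gext F) = typeOf (Div N D) ->
    derivable (plug_dollar D F) N ->
    derivable F (Div N D)
| d_prodL G e F A :
    wf_lgraph G ->
    lab_at G e = Some (Prod F) ->
    derivable (repl G (single e F)) A ->
    derivable G A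
| d_prodR M (Hs : nat -> graph typ) :
    wf_typ (Prod M) ->
    (forall i T, lab_at M i = Some T -> derivable (Hs i) T) ->
    derivable (repl M (fun i => if i <? length (gE M) then Some (Hs i) else None)) (Prod M)
| d_iso G G' A A' :
    derivable G A -> giso typ_equiv G G' -> typ_equiv A A' -> derivable G' A'.

Inductive step := SNum | SDen (i : nat) | SProd (i : nat).

Fixpoint sub_at (p : list step) (A : typ) : option typ :=
  match p with
  | [] => Some A
  | s :: p' =>
    match s, A with
    | SNum, Div N _ => sub_at p' N
    | SDen i, Div _ D =>
        match lab_at D i with Some (Some T) => sub_at p' T | _ => None end
    | SProd i, Prod M =>
        match lab_at M i with Some T => sub_at p' T | None => None end
    | _, _ => None
    end
  end.

Definition top_path (p : list step) : Prop :=
  forall s, In s p -> match s with SDen _ => False | _ => True end.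

Definition skeleton (A : typ) : Prop :=
  match A with
  | Prod M => gE M = [] /\ length (gext M) = length (gV M)
  | _ => False
  end.

Definition no_skeleton_subtypes (A : typ) : Prop :=
  forall p B, sub_at p A = Some B -> ~ skeleton B.

Definition lonely (q : typ) (A : typ) : Prop :=
  forall p, top_path p -> sub_at p A = Some q ->
    exists p' i M, p = p' ++ [SProd i] /\ sub_at p' A = Some (Prod M) /\
                   2 <= length (gE M).

(* Main.v *)
Require Import Defs.
From Stdlib Require Import List Arith Bool PeanoNat Permutation Lia.
Import ListNotations.

Lemma rg_app {L} (f : nat -> option (graph L)) (l1 l2 : list (L * list nat)) : forall i s,
  exists s', s <= s' /\
  fst (repl_go f (l1 ++ l2) i s) = fst (repl_go f l1 i s) ++ fst (repl_go f l2 (i + length l1) s') /\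
  snd (repl_go f (l1 ++ l2) i s) = snd (repl_go f l1 i s) ++ snd (repl_go f l2 (i + length l1) s').
Proof.
  induction l1 as [|x l1 IH]; intros i s.
  - exists s. simpl. rewrite Nat.add_0_r. auto.
  - simpl. destruct (f i) as [H|].
    + destruct (IH (S i) (s + fresh H)) as [s' [Hs [E1 E2]]].
      exists s'. split; [lia|]. simpl. rewrite E1, E2.
      replace (i + S (length l1)) with (S i + length l1) by lia.
      split; apply app_assoc.
    + destruct (IH (S i) s) as [s' [Hs [E1 E2]]].
      exists s'. split; [lia|]. simpl. rewrite E1, E2.
      replace (i + S (length l1)) with (S i + length l1) by lia. auto.
Qed.

Lemma rg_none {L} (f : nat -> option (graph L)) (l : list (L * list nat)) : forall i s,
  (forall j, i <= j -> j < i + length l -> f j = None) ->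
  repl_go f l i s = ([], l).
Proof.
  induction l as [|x l IH]; intros i s Hf; simpl; auto.
  rewrite (Hf i) by (simpl; lia).
  rewrite IH; auto.
  intros j H1 H2. apply Hf; simpl in *; lia.
Qed.

Lemma rg_mem {L} (f : nat -> option (graph L)) (l : list (L * list nat)) : forall i s m x,
  nth_error l m = Some x -> f (i + m) = None -> In x (snd (repl_go f l i s)).
Proof.
  induction l as [|y l IH]; intros i s m x Hn Hf.
  - destruct m; discriminate.
  - destruct m as [|m]; simpl in Hn.
    + inversion Hn; subst. rewrite Nat.add_0_r in Hf. simpl. rewrite Hf. simpl. auto.
    + simpl. destruct (f i).
      * simpl. apply in_or_app. right. apply (IH (S i) _ m); auto. rewrite <- Hf. f_equal. lia.
      * simpl. right. apply (IH (S i) _ m); auto. rewrite <- Hf. f_equal. lia.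
Qed.

Lemma rg_cons_some {L} (f : nat -> option (graph L)) x l i s H :
  f i = Some H -> repl_go f (x :: l) i s =
   (new_nodes H s ++ fst (repl_go f l (S i) (s + fresh H)),
    new_edges H (snd x) s ++ snd (repl_go f l (S i) (s + fresh H))).
Proof. intros Hf. simpl. rewrite Hf. reflexivity. Qed.

Lemma rg_single {L} (es : list (L * list nat)) e (F : graph L) x s :
  nth_error es e = Some x ->
  exists s', s <= s' /\ repl_go (single e F) es 0 s =
    (new_nodes F s', firstn e es ++ new_edges F (snd x) s' ++ skipn (S e) es).
Proof.
  intros Hn.
  assert (Hlen : e < length es) by (apply nth_error_Some; congruence).
  pose proof (firstn_skipn_middle e es Hn) as Hm.
  assert (Hfl : length (firstn e es) = e) by (apply firstn_length_le; lia).
  destruct (rg_app (single e F) (firstn e es) (x :: skipn (S e) es) 0 s) as [s1 [Hs1 [E1 E2]]].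
  rewrite Hm in E1, E2.
  rewrite (rg_none (single e F) (firstn e es)) in E1, E2.
  2:{ intros j _ Hj. unfold single. rewrite Hfl in Hj.
      destruct (Nat.eqb_spec j e); [lia|auto]. }
  2:{ intros j _ Hj. unfold single. rewrite Hfl in Hj.
      destruct (Nat.eqb_spec j e); [lia|auto]. }
  rewrite Hfl in E1, E2. cbn [fst snd app] in E1, E2. rewrite ?Nat.add_0_l in E1, E2.
  rewrite (rg_cons_some (single e F) x _ e s1 F) in E1, E2
    by (unfold single; rewrite Nat.eqb_refl; auto).
  simpl in E1, E2.
  rewrite (rg_none (single e F) (skipn (S e) es)) in E1, E2.
  2:{ intros j Hj _. unfold single. destruct (Nat.eqb_spec j e); [lia|auto]. }
  2:{ intros j Hj _. unfold single. destruct (Nat.eqb_spec j e); [lia|auto]. }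
  simpl in E1, E2. rewrite ?app_nil_r in E1.
  exists s1. split; auto.
  destruct (repl_go (single e F) es 0 s) as [a b]. simpl in E1, E2. subst. reflexivity.
Qed.

Lemma sub_at_app q r : forall T,
  sub_at (q ++ r) T = match sub_at q T with Some U => sub_at r U | None => None end.
Proof.
  induction q as [|s q IH]; intros T; simpl; auto.
  destruct s, T; simpl; auto.
  - destruct (lab_at g i) as [[U|]|]; auto.
  - destruct (lab_at g i) as [U|]; auto.
Qed.

Lemma top_path_app q s : top_path q -> match s with SDen _ => False | _ => True end ->
  top_path (q ++ [s]).
Proof.
  intros H1 H2 s' Hs. apply in_app_or in Hs. destruct Hs as [Hs|[Hs|[]]].
  - apply H1; auto.
  - subst; auto.
Qed.

Inductive Good (n k : nat) (Tset : typ -> Prop) : typ -> Prop :=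
| good_p : Good n k Tset (Prim n k)
| good_base T q V : Tset T -> top_path q -> sub_at q T = Some V -> Good n k Tset V
| good_eq U U' : Good n k Tset U' -> typ_equiv U U' -> Good n k Tset U.

Lemma Forall2_in {A B} (R : A -> B -> Prop) l1 l2 x :
  Forall2 R l1 l2 -> In x l1 -> exists y, In y l2 /\ R x y.
Proof.
  induction 1; simpl; [tauto|]. intros [<-|Hx].
  - exists y; auto.
  - destruct (IHForall2 Hx) as [z [? ?]]; eauto.
Qed.

Lemma good_num (n k : nat) (Tset : typ -> Prop)
  (HT : forall T, Tset T -> wf_typ T /\ no_skeleton_subtypes T /\ lonely (Prim n k) T) U : Good n k Tset U -> forall N D, U = Div N D -> Good n k Tset N.
Proof.
  induction 1; intros N D E; subst.
  - discriminate.
  - apply (good_base _ _ _ T (q ++ [SNum])); auto.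
    + apply top_path_app; auto.
    + rewrite sub_at_app, H1. reflexivity.
  - inversion H0; subst. eapply good_eq; [eapply IHGood; reflexivity|]. auto.
Qed.

Lemma good_prod (n k : nat) (Tset : typ -> Prop)
  (HT : forall T, Tset T -> wf_typ T /\ no_skeleton_subtypes T /\ lonely (Prim n k) T) U : Good n k Tset U -> forall F, U = Prod F ->
  forall x, In x (gE F) -> Good n k Tset (fst x).
Proof.
  induction 1; intros F E x Hx; subst.
  - discriminate.
  - destruct (In_nth_error _ _ Hx) as [i Hi].
    apply (good_base _ _ _ T (q ++ [SProd i])); auto.
    + apply top_path_app; auto.
    + rewrite sub_at_app, H1. simpl. unfold lab_at. rewrite Hi. reflexivity.
  - inversion H0; subst. match goal with Hx : exists f, _ |- _ => destruct Hx as [f [_ [_ [_ [es [Hp Hf]]]]]] end.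
    destruct (Forall2_in _ _ _ _ Hf Hx) as [y [Hy [Hxy _]]].
    eapply good_eq; [eapply IHGood; [reflexivity|]|exact Hxy].
    eapply Permutation_in; eauto.
Qed.

Lemma good_noskel (n k : nat) (Tset : typ -> Prop)
  (HT : forall T, Tset T -> wf_typ T /\ no_skeleton_subtypes T /\ lonely (Prim n k) T) U : Good n k Tset U -> ~ skeleton U.
Proof.
  induction 1.
  - simpl; auto.
  - destruct (HT T H) as [_ [Hs _]]. eapply Hs; eauto.
  - intros Hsk. apply IHGood. destruct U as [| |F]; try contradiction.
    inversion H0; subst. match goal with Hx : exists f, _ |- _ => destruct Hx as [f [_ [Hp [He [es [Hperm Hf]]]]]] end.
    destruct Hsk as [E1 E2]. rewrite E1 in Hf. inversion Hf; subst.
    simpl. split.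
    + apply Permutation_nil; exact Hperm.
    + rewrite <- He, length_map, <- (Permutation_length Hp), length_map. auto.
Qed.

Lemma good_not_divp (n k : nat) (Tset : typ -> Prop)
  (HT : forall T, Tset T -> wf_typ T /\ no_skeleton_subtypes T /\ lonely (Prim n k) T) U : Good n k Tset U -> forall D, U <> Div (Prim n k) D.
Proof.
  induction 1; intros D E; subst.
  - discriminate.
  - destruct (HT T H) as [_ [_ Hl]].
    destruct (Hl (q ++ [SNum])) as [p' [i [M [E1 _]]]].
    + apply top_path_app; auto.
    + rewrite sub_at_app, H1. reflexivity.
    + apply app_inj_tail in E1. destruct E1 as [_ E]. discriminate.
  - inversion H0; subst. match goal with Hx : typ_equiv (Prim _ _) _ |- _ => inversion Hx; subst end. eapply IHGood; reflexivity.
Qed.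

Lemma good_not_single (n k : nat) (Tset : typ -> Prop)
  (HT : forall T, Tset T -> wf_typ T /\ no_skeleton_subtypes T /\ lonely (Prim n k) T) U : Good n k Tset U -> forall F a, U = Prod F ->
  gE F = [(Prim n k, a)] -> False.
Proof.
  induction 1; intros F a E Hf; subst.
  - discriminate.
  - destruct (HT T H) as [_ [_ Hl]].
    destruct (Hl (q ++ [SProd 0])) as [p' [i [M [E1 [E2 E3]]]]].
    + apply top_path_app; auto.
    + rewrite sub_at_app, H1. simpl. unfold lab_at. rewrite Hf. reflexivity.
    + apply app_inj_tail in E1. destruct E1 as [E _]. subst p'.
      rewrite H1 in E2. inversion E2; subst. rewrite Hf in E3. simpl in E3. lia.
  - inversion H0; subst. match goal with Hx : exists f, _ |- _ => destruct Hx as [f [_ [_ [_ [es [Hp Hf2]]]]]] end.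
    rewrite Hf in Hf2. inversion Hf2; subst.
    match goal with Hx : Forall2 _ [] _ |- _ => inversion Hx; subst end.
    match goal with Hx : typ_equiv _ _ /\ _ |- _ => destruct Hx as [Heq Hm] end.
    simpl in Heq. inversion Heq; subst.
    apply Permutation_length_1_inv in Hp.
    eapply IHGood; [reflexivity|]. rewrite Hp. instantiate (1 := snd y).
    destruct y; simpl in *; subst; reflexivity.
Qed.



Lemma gE_repl {L} (G : graph L) f : gE (repl G f) = snd (repl_go f (gE G) 0 (fresh G)).
Proof. reflexivity. Qed.
Lemma gV_repl {L} (G : graph L) f : gV (repl G f) = gV G ++ fst (repl_go f (gE G) 0 (fresh G)).
Proof. reflexivity. Qed.
Lemma gext_repl {L} (G : graph L) f : gext (repl G f) = gext G.
Proof. reflexivity. Qed.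

Lemma divL_labels H e N D Hs a :
  nth_error (gE H) e = Some (N, a) -> wf_typ (Div N D) ->
  (exists b, In (Div N D, b) (gE (divL_concl H e N D Hs))) /\
  (forall j x, j <> e -> nth_error (gE H) j = Some x ->
     exists b, In (fst x, b) (gE (divL_concl H e N D Hs))).
Proof.
  intros Hn Hwf.
  assert (Hlen : e < length (gE H)) by (apply nth_error_Some; congruence).
  unfold divL_concl; cbv zeta.
  set (es := gE (map_lab Some H)).
  assert (Hes : nth_error es e = Some (Some N, a)).
  { unfold es, map_lab. simpl. rewrite nth_error_map, Hn. reflexivity. }
  assert (Hesl : length es = length (gE H)) by (unfold es, map_lab; simpl; apply length_map).
  destruct (rg_single es e D _ (fresh (map_lab Some H)) Hes) as [s' [_ Hrg]].
  set (rl := fun o : option typ => match o with None => Div N D | Some T => T end).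
  set (G2 := map_lab rl (repl (map_lab Some H) (single e D))).
  assert (HG2 : gE G2 = map (fun x => (rl (fst x), snd x))
      (firstn e es ++ new_edges D a s' ++ skipn (S e) es)).
  { unfold G2. unfold map_lab at 1. cbn [gE]. rewrite gE_repl. fold es. rewrite Hrg. reflexivity. }
  assert (Hfe : length (firstn e es) = e) by (apply firstn_length_le; lia).
  assert (Hne : length (new_edges D a s') = length (gE D)) by (unfold new_edges; apply length_map).
  rewrite gE_repl.
  split.
  - inversion Hwf; subst.
    assert (exists y, In y (filter (fun e => match fst e with None => true | Some _ => false end) (gE D))) as [y Hy].
    { match goal with Hx : length (filter ?p (gE D)) = 1 |- _ => destruct (filter p (gE D)) as [|y l]; [simpl in Hx; discriminate|exists y; simpl; auto] end. }
    apply filter_In in Hy. destruct Hy as [Hy Hy2].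
    destruct y as [[o|] b]; [discriminate|]. simpl in Hy2.
    destruct (In_nth_error _ _ Hy) as [m Hm].
    assert (Hml : m < length (gE D)) by (apply nth_error_Some; congruence).
    eexists. eapply (rg_mem _ _ 0 _ (e + m)).
    + rewrite HG2, nth_error_map, nth_error_app2 by lia. rewrite Hfe.
      replace (e + m - e) with m by lia.
      rewrite nth_error_app1 by lia. unfold new_edges. rewrite nth_error_map, Hm. simpl. reflexivity.
    + simpl. replace (e <=? e + m) with true by (symmetry; apply Nat.leb_le; lia).
      replace (e + m <? e + length (gE D)) with true by (symmetry; apply Nat.ltb_lt; lia).
      simpl. replace (e + m - e) with m by lia. unfold lab_at. rewrite Hm. reflexivity.
  - intros j x Hj Hx.
    assert (Hjl : j < length (gE H)) by (apply nth_error_Some; congruence).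
    assert (Hx' : nth_error es j = Some (Some (fst x), snd x)).
    { unfold es, map_lab. simpl. rewrite nth_error_map, Hx. reflexivity. }
    destruct (Nat.lt_ge_cases j e) as [Hlt|Hge].
    + eexists. eapply (rg_mem _ _ 0 _ j).
      * rewrite HG2, nth_error_map, nth_error_app1 by lia.
        rewrite nth_error_firstn. replace (j <? e) with true by (symmetry; apply Nat.ltb_lt; lia).
        rewrite Hx'. simpl. reflexivity.
      * simpl. replace (e <=? j) with false by (symmetry; apply Nat.leb_gt; lia). reflexivity.
    + eexists. eapply (rg_mem _ _ 0 _ (e + length (gE D) + (j - S e))).
      * rewrite HG2, nth_error_map, nth_error_app2 by lia. rewrite Hfe.
        rewrite nth_error_app2 by lia. rewrite Hne.
        replace (e + length (gE D) + (j - S e) - e - length (gE D)) with (j - S e) by lia.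
        rewrite nth_error_skipn. replace (S e + (j - S e)) with j by lia.
        rewrite Hx'. simpl. reflexivity.
      * simpl. replace (e + length (gE D) + (j - S e) <? e + length (gE D)) with false
          by (symmetry; apply Nat.ltb_ge; lia). rewrite andb_false_r. reflexivity.
Qed.

Lemma in_firstn_in {A} (x : A) n l : In x (firstn n l) -> In x l.
Proof. intros H. rewrite <- (firstn_skipn n l). apply in_or_app; auto. Qed.
Lemma in_skipn_in {A} (x : A) n l : In x (skipn n l) -> In x l.
Proof. intros H. rewrite <- (firstn_skipn n l). apply in_or_app; auto. Qed.

Lemma fold_max_ge x l : In x l -> x <= fold_right Nat.max 0 l.
Proof. induction l; simpl; [tauto|]. intros [->|H]; [lia|]. specialize (IHl H). lia. Qed.

Lemma fresh_gt {L} (G : graph L) x : In x (gV G) -> x < fresh G.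
Proof. intros H. unfold fresh. apply fold_max_ge in H. lia. Qed.

Lemma pos_none v l : ~ In v l -> pos v l = None.
Proof.
  induction l as [|y l IH]; simpl; auto. intros H.
  destruct (Nat.eqb_spec v y); [exfalso; auto|]. rewrite IH; auto.
Qed.

Lemma pos_spec v l : forall i, pos v l = Some i -> nth_error l i = Some v.
Proof.
  induction l as [|y l IH]; simpl; intros i H; [discriminate|].
  destruct (Nat.eqb_spec v y).
  - inversion H; subst; reflexivity.
  - destruct (pos v l) eqn:E; simpl in H; [|discriminate]. inversion H; subst. simpl. auto.
Qed.

Lemma pos_in v l : In v l -> exists i, pos v l = Some i.
Proof.
  induction l as [|y l IH]; simpl; [tauto|]. intros H.
  destruct (Nat.eqb_spec v y); [eauto|].
  destruct H as [H|H]; [congruence|]. destruct (IH H) as [i Hi]. rewrite Hi. simpl. eauto.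
Qed.

Lemma pos_map l : NoDup l -> map (fun v => pos v l) l = map Some (seq 0 (length l)).
Proof.
  induction 1 as [|x l Hx Hnd IH]; simpl; auto.
  rewrite Nat.eqb_refl. f_equal.
  rewrite (map_ext_in _ (fun v => option_map S (pos v l))).
  2:{ intros v Hv. destruct (Nat.eqb_spec v x); [subst; contradiction|auto]. }
  rewrite <- (map_map (fun v => pos v l) (option_map S)), IH, map_map.
  rewrite <- seq_shift, map_map. reflexivity.
Qed.

Lemma app_single {A} (l1 l3 : list A) z w : l1 ++ z :: l3 = [w] -> z = w.
Proof.
  destruct l1 as [|a l1]; simpl; intros H; inversion H; auto.
  destruct l1; discriminate.
Qed.

Lemma not_incl_ex (l m : list nat) : (forall v, In v l -> In v m) \/ exists v, In v l /\ ~ In v m.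
Proof.
  induction l as [|x l IH]; [left; simpl; tauto|].
  destruct (in_dec Nat.eq_dec x m).
  - destruct IH as [IH|[v [H1 H2]]].
    + left. simpl. intros v [<-|H]; auto.
    + right. exists v; simpl; auto.
  - right. exists x; simpl; auto.
Qed.

Definition Pg (n k : nat) (G : graph typ) : Prop :=
  gE G = [(Prim n k, gext G)] /\ Permutation (gV G) (gext G).

Lemma main (n k : nat) (Tset : typ -> Prop)
  (HT : forall T, Tset T -> wf_typ T /\ no_skeleton_subtypes T /\ lonely (Prim n k) T)
  G A : derivable G A -> A = Prim n k ->
  (forall x, In x (gE G) -> Good n k Tset (fst x)) -> Pg n k G.
Proof.
  intros Hd; induction Hd; intros HA HG.
  -
    inversion HA; subst. split; simpl; auto.
  -
    rename H into Hg, H0 into Hwf, H1 into Hlab.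
    unfold lab_at in Hlab. destruct (nth_error (gE Hg) e) as [[N' a]|] eqn:Hn; [|discriminate].
    simpl in Hlab. inversion Hlab; subst N'.
    destruct (divL_labels Hg e N D Hs a Hn Hwf) as [[b Hb] Hj].
    assert (GD : Good n k Tset (Div N D)) by exact (HG _ Hb).
    assert (PH : Pg n k Hg).
    { apply IHHd; auto. intros x Hx. destruct (In_nth_error _ _ Hx) as [j Hjx].
      destruct (Nat.eq_dec j e) as [->|Hne].
      - rewrite Hn in Hjx. inversion Hjx; subst. simpl. eapply good_num; eauto.
      - destruct (Hj j x Hne Hjx) as [b' Hb']. exact (HG _ Hb'). }
    destruct PH as [EH _]. rewrite EH in Hn.
    destruct e as [|[|e]]; simpl in Hn; try discriminate.
    inversion Hn; subst. exfalso. eapply good_not_divp; eauto.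
  - discriminate.
  -
    rename H into Hwf, H0 into Hlab.
    unfold lab_at in Hlab. destruct (nth_error (gE G) e) as [[F' a]|] eqn:Hn; [|discriminate].
    simpl in Hlab. inversion Hlab; subst F'.
    assert (GF : Good n k Tset (Prod F)) by exact (HG _ (nth_error_In _ _ Hn)).
    destruct (rg_single (gE G) e F (Prod F, a) (fresh G) Hn) as [s' [Hs' Hrg]].
    assert (PP : Pg n k (repl G (single e F))).
    { apply IHHd; auto. intros x Hx. rewrite gE_repl, Hrg in Hx. cbn [snd] in Hx.
      apply in_app_or in Hx. destruct Hx as [Hx|Hx]; [apply HG; eapply in_firstn_in; eauto|].
      apply in_app_or in Hx. destruct Hx as [Hx|Hx]; [|apply HG; eapply in_skipn_in; eauto].
      unfold new_edges in Hx. apply in_map_iff in Hx. destruct Hx as [y [<- Hy]]. simpl.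
      exact (good_prod n k Tset HT _ GF F eq_refl y Hy). }
    destruct PP as [EP VP].
    rewrite gE_repl, Hrg, gext_repl in EP. cbn [snd fst] in EP.
    rewrite gV_repl, Hrg, gext_repl in VP. cbn [snd fst] in VP.
    destruct (gE F) as [|y [|y2 l]] eqn:EF.
    +
      exfalso.
      assert (WF : wf_graph F).
      { destruct Hwf as [_ Hwf]. destruct (Hwf _ (nth_error_In _ _ Hn)) as [Hw _].
        simpl in Hw. inversion Hw; auto. }
      destruct WF as [ND1 [ND2 [Hinc _]]].
      destruct (not_incl_ex (gV F) (gext F)) as [Hall|[v [Hv1 Hv2]]].
      * apply (good_noskel n k Tset HT _ GF). simpl. split; auto.
        apply Nat.le_antisymm.
        -- apply NoDup_incl_length; auto.
        -- apply NoDup_incl_length; auto.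
      * assert (Hin : In (s' + v) (gV G ++ new_nodes F s')).
        { apply in_or_app. right. unfold new_nodes. apply in_map.
          apply filter_In. split; auto. rewrite pos_none; auto. }
        apply (Permutation_in _ VP) in Hin.
        destruct Hwf as [[_ [_ [Hinc2 _]]] _].
        apply Hinc2, fresh_gt in Hin. lia.
    + exfalso. unfold new_edges in EP. rewrite EF in EP. simpl in EP.
      apply app_single in EP. inversion EP.
      apply (good_not_single n k Tset HT _ GF F (snd y)); auto.
      rewrite EF. destruct y; simpl in *; subst; reflexivity.
    + exfalso. apply (f_equal (@length _)) in EP.
      rewrite !length_app in EP. unfold new_edges in EP. rewrite length_map, EF in EP.
      simpl in EP. lia.
  - discriminate.
  -
    subst A'. inversion H0; subst.
    destruct H as [f [Hinj [Hperm [Hext [es [Hpes Hf2]]]]]].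
    assert (PG : Pg n k G).
    { apply IHHd; auto. intros x Hx.
      destruct (Forall2_in _ _ _ _ Hf2 Hx) as [y [Hy [Hxy _]]].
      eapply good_eq; [apply HG; eapply Permutation_in; eauto|exact Hxy]. }
    destruct PG as [EG VG]. rewrite EG in Hf2.
    inversion Hf2; subst. match goal with Hx : Forall2 _ [] _ |- _ => inversion Hx; subst end.
    match goal with Hx : typ_equiv _ _ /\ _ |- _ => destruct Hx as [Heq Hm] end.
    simpl in Heq, Hm. inversion Heq; subst.
    apply Permutation_length_1_inv in Hpes.
    split.
    + rewrite Hpes, <- Hext, Hm. destruct y; simpl in *; subst; reflexivity.
    + rewrite <- Hext. apply Permutation_sym in Hperm.
      eapply Permutation_trans; [exact Hperm|]. apply Permutation_map; auto.
Qed.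

Theorem corollary1 (n k : nat) (Tset : typ -> Prop) (H : graph typ) :
  (forall T, Tset T -> wf_typ T /\ no_skeleton_subtypes T /\ lonely (Prim n k) T) ->
  wf_lgraph H ->
  (forall e, In e (gE H) -> fst e = Prim n k \/ exists T, Tset T /\ typ_equiv (fst e) T) ->
  derivable H (Prim n k) ->
  giso typ_equiv H (handle n k).
Proof.
  intros HT Hwf Hlab Hd.
  destruct (main n k Tset HT H _ Hd eq_refl) as [EH VH].
  { intros x Hx. destruct (Hlab x Hx) as [->|[T [HT1 HT2]]].
    - apply good_p.
    - eapply good_eq; [|exact HT2]. apply (good_base _ _ _ T []); auto.
      intros s []. }
  destruct Hwf as [[NDV [NDE [Hinc _]]] Hwl].
  assert (Hk : length (gext H) = k).
  { rewrite EH in Hwl. destruct (Hwl _ (or_introl eq_refl)) as [_ Ht]. simpl in Ht. auto. }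
  set (f := fun v => match pos v (gext H) with Some j => j | None => 0 end).
  assert (Hmap : map f (gext H) = seq 0 k).
  { unfold f. rewrite <- (map_map (fun v => pos v (gext H)) (fun o => match o with Some j => j | None => 0 end)).
    rewrite pos_map by auto. rewrite map_map, map_id. rewrite Hk. reflexivity. }
  exists f. split; [|split; [|split]].
  - intros x y Hx Hy Hfxy.
    apply (Permutation_in _ VH) in Hx. apply (Permutation_in _ VH) in Hy.
    destruct (pos_in _ _ Hx) as [i Hi]. destruct (pos_in _ _ Hy) as [j Hj].
    unfold f in Hfxy. rewrite Hi, Hj in Hfxy. subst j.
    apply pos_spec in Hi. apply pos_spec in Hj. congruence.
  - simpl. rewrite <- Hmap. apply Permutation_map. auto.
  - simpl. exact Hmap.
  - exists (gE (handle n k)). split; [apply Permutation_refl|].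
    rewrite EH. simpl. constructor; [|constructor].
    split; [constructor|]. simpl. exact Hmap.
Qed.
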